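(* Let $N\geq 2$, and let $f:\{0,1\}^N\to\{0,1\}$ be a total function. Then \[\mathrm{H}(\mathrm{C}_f)\leq 10\mathrm{Bal}(f)\log N.\]
   Context: $\mathrm{C}_f(x)$ is the certificate complexity of $f$ at $x$. For $g:\{0,1\}^N\to[0,\infty)$, the H-index $\mathrm{H}(g)$ is the maximum $h$ such that at least $2^h$ inputs satisfy $g(x)\geq h$ (equivalently, the minimum $h$ such that at most $2^h$ inputs satisfy $g(x)>h$). $\mathrm{Bal}(f)$ is $0$ if $f$ is constant, and otherwise $\min\{1+\log|f^{-1}(0)|,\,1+\log|f^{-1}(1)|\}$ (log base 2). *)

(* Defs.v *)
From HB Require Import structures.
From mathcomp Require Import all_boot all_order all_algebra.
From mathcomp Require Import all_classical all_reals.
From mathcomp Require Import exp.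

Set Implicit Arguments.
Unset Strict Implicit.
Unset Printing Implicit Defensive.

Import Order.TTheory GRing.Theory Num.Theory.
Local Open Scope classical_set_scope.
Local Open Scope ring_scope.

Definition input (N : nat) := {ffun 'I_N -> bool}.

Definition is_cert (N : nat) (f : input N -> bool) (x : input N)
    (S : {set 'I_N}) : bool :=
  [forall y : input N, [forall i in S, y i == x i] ==> (f y == f x)].

(* Certificate complexity C_f(x): minimum size of a certificate for f at x
   (the full set is always a certificate, so the default N is harmless). *)
Definition cert_cplx (N : nat) (f : input N -> bool) (x : input N) : nat :=
  \big[minn/N]_(S : {set 'I_N} | is_cert f x S) #|S|.

Definition log2 {R : realType} (x : R) : R := ln x / ln 2.

(* H-index of g : {0,1}^N -> [0,oo): the maximum (real) h such that at least
   2^h inputs satisfy g x >= h.  The maximum is attained, so it equals the sup. *)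
Definition Hindex {R : realType} (N : nat) (g : input N -> R) : R :=
  sup [set h : R | 2 `^ h <= (#|[set x : input N | h <= g x]|)%:R].

Definition Bal {R : realType} (N : nat) (f : input N -> bool) : R :=
  if [forall x : input N, forall y : input N, f x == f y] then 0
  else Num.min (1 + log2 (#|[set x : input N | ~~ f x]|)%:R)
               (1 + log2 (#|[set x : input N | f x]|)%:R).

(* Main.v *)
Require Import Defs.
From HB Require Import structures.
From mathcomp Require Import all_boot all_order all_algebra.
From mathcomp Require Import all_classical all_reals.
From mathcomp Require Import exp.
From mathcomp Require Import zify ring lra.

Import Order.TTheory GRing.Theory Num.Theory.

Section Comb.
Variable N : nat.
Implicit Types (Z : {set input N}) (x : input N).

Definition majb Z (i : 'I_N) : bool := (#|Z| <= 2 * #|[set y in Z | y i]|)%N.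

Fixpoint dec Z (s : seq 'I_N) : input N :=
  match s with
  | [::] => [ffun i => majb Z i]
  | i :: s' => dec [set y in Z | y i == ~~ majb Z i] s'
  end.

Lemma half_card Z i :
  (2 * #|[set y in Z | y i == ~~ majb Z i]| <= #|Z|)%N.
Proof.
have Hs : (#|[set y in Z | y i]| + #|[set y in Z | ~~ y i]| = #|Z|)%N.
  rewrite -(cardsID [set y : input N | y i] Z); congr (_ + _); apply: eq_card => y;
  by rewrite !inE andbC.
case E: (majb Z i); move: E; rewrite /majb => Hm /=;
  [move: Hm => /idP Hm | move: Hm => /negbT; rewrite -ltnNge => Hm].
  have -> : [set y in Z | y i == false] = [set y in Z | ~~ y i].
    by apply/setP => y; rewrite !inE; case: (y i).
  move: Hs Hm; move: #|[set y in Z | y i]| #|[set y in Z | ~~ y i]| #|Z| => a b c; lia.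
have -> : [set y in Z | y i == true] = [set y in Z | y i].
  by apply/setP => y; rewrite !inE; case: (y i).
move: Hs Hm; move: #|[set y in Z | y i]| #|[set y in Z | ~~ y i]| #|Z| => a b c; lia.
Qed.

Lemma enc n : forall Z x,
  (#|Z| < 2 ^ n)%N ->
  (forall S : {set 'I_N}, (#|S| <= n)%N ->
     exists2 y, y \in Z & [forall i in S, y i == x i]) ->
  exists2 s : seq 'I_N, (size s < n.+1)%N & dec Z s = x.
Proof.
elim: n => [|n IH] Z x HZ HQ.
  have [|y yZ _] := HQ (finset.set0 : {set 'I_N}); first by rewrite cards0.
  by move: HZ; rewrite expn0 ltnS leqn0 => /eqP/cards0_eq Z0; rewrite Z0 inE in yZ.
have [Hx|Hx] := eqVneq [ffun i => majb Z i] x.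
  by exists [::].
have [i Hi] : exists i, majb Z i != x i.
  apply/existsP; apply: contraT; rewrite negb_exists => /forallP H.
  move: Hx; apply: contraNT => _; apply/eqP/ffunP => i; rewrite ffunE.
  by move: (H i); rewrite negbK => /eqP.
have Ei : ~~ majb Z i = x i by move: Hi; case: (majb Z i); case: (x i).
set Z' := [set y in Z | y i == ~~ majb Z i].
have HZ' : (#|Z'| < 2 ^ n)%N.
  move: HZ; rewrite expnS; have := half_card Z i; rewrite -/Z'; lia.
have HQ' : forall S : {set 'I_N}, (#|S| <= n)%N ->
     exists2 y, y \in Z' & [forall i in S, y i == x i].
  move=> S HS.
  have [|y yZ /forallP Hy] := HQ (i |: S).
    by rewrite cardsU1; move: HS; case: (i \in S) => /= HS; lia.
  exists y.
    rewrite inE yZ /= Ei.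
    by have := Hy i; rewrite setU11.
  apply/forallP => j; apply/implyP => jS.
  by have := Hy j; rewrite inE jS orbT.
have [s Hs Hd] := IH Z' x HZ' HQ'.
by exists (i :: s).
Qed.

Lemma cert_le (f : input N -> bool) x (S : {set 'I_N}) :
  is_cert f x S -> (cert_cplx f x <= #|S|)%N.
Proof.
move=> H; rewrite /cert_cplx.
have : S \in index_enum {set 'I_N} by rewrite mem_index_enum.
elim: (index_enum _) => [|a r IH] //.
rewrite inE big_cons => /orP [/eqP <-|Hr].
  by rewrite H geq_minl.
case: ifP => _; last exact: IH.
by rewrite geq_min IH ?orbT.
Qed.

Lemma pmap_pad (s : seq 'I_N) k :
  pmap id (map Some s ++ nseq k None) = s.
Proof.
rewrite pmap_cat; elim: s => [|a s IH] /=.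
  by elim: k => //.
by rewrite IH.
Qed.

Lemma count_bound (f : input N -> bool) (b : bool) (K : nat) :
  (#|[set y | f y == b]| < 2 ^ K)%N ->
  (#|[set x | (K < cert_cplx f x)%N]| <= #|[set y | f y == b]| + (N.+1) ^ K)%N.
Proof.
move=> Hm.
set Y := [set y | f y == b].
set D := [set dec Y (pmap id (val t)) | t in [set: K.-tuple (option 'I_N)]].
have HD : (#|D| <= N.+1 ^ K)%N.
  apply: (leq_trans (leq_imset_card _ _)).
  by rewrite cardsT card_tuple card_option card_ord.
apply: (@leq_trans #|Y :|: D|); last by have := cardsUI Y D; lia.
apply: subset_leq_card.
apply/fintype.subsetP => x; rewrite inE => Hx.
rewrite inE; case Efx: (f x == b); first by rewrite inE Efx.
apply/orP; right.
have [|s Hs Hd] := @enc K Y x Hm.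
  move=> S HS.
  have Hnc : ~~ is_cert f x S.
    apply/negP => Hc; have := @cert_le f x S Hc; lia.
  move: Hnc; rewrite /is_cert negb_forall => /existsP [y].
  rewrite negb_imply => /andP [Hy Hf].
  exists y => //; rewrite inE.
  by move: Hf Efx; case: (f y); case: (f x); case: (b).
have Hsz : size (map Some s ++ nseq (K - size s) None) == K.
  rewrite size_cat size_map size_nseq; apply/eqP; lia.
apply/imsetP; exists (Tuple Hsz); first by rewrite inE.
by rewrite /= pmap_pad Hd.
Qed.

End Comb.

Local Open Scope ring_scope.

Lemma card_cset (T : finType) (p : pred T) :
  #|[set x | p x]%classic| = #|[set x | p x]|.
Proof. apply: eq_card => x; rewrite finset.inE; exact: asboolb. Qed.

Lemma Hindex_le (R : realType) (N : nat) (g : input N -> R) (B : R) :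
  (forall x, 0 <= g x) ->
  (forall h, B < h -> (#|[set x | h <= g x]|)%:R < 2 `^ h) ->
  Hindex g <= B.
Proof.
move=> g0 H; apply: ge_sup.
  exists 0; rewrite /= card_cset powRr0 ler1n; apply/card_gt0P.
  by exists [ffun=> false]; rewrite inE; apply: g0.
move=> h; rewrite /= card_cset => Hh; rewrite leNgt; apply/negP => Hlt.
by have := H h Hlt; rewrite ltNge Hh.
Qed.

Lemma pow2_log2 (R : realType) (x : R) : 0 < x -> 2 `^ log2 x = x.
Proof.
move=> x0; rewrite /powR /log2 pnatr_eq0 /= mulfVK; last first.
  by rewrite gt_eqF // ln_gt0 // ltr1n.
by rewrite lnK // posrE.
Qed.

Lemma nat_bound (N m K : nat) : (2 <= N)%N -> (0 < K)%N -> (m < 2 ^ K)%N ->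
  (m + N.+1 ^ K < N ^ (10 * K))%N.
Proof.
move=> HN HK Hm.
have H1 : (2 ^ K <= N ^ K)%N by rewrite leq_exp2r.
have H2 : (N.+1 ^ K <= N ^ K * N ^ K)%N.
  rewrite -expnMn leq_exp2r //; nia.
have H3 : (N ^ (3 * K) <= N ^ (10 * K))%N by rewrite leq_pexp2l //; [lia|lia].
have H4 : (N ^ (3 * K) = N ^ K * N ^ K * N ^ K)%N by rewrite mulnC expnM expnS expnS expn1 mulnA.
have H5 : (2 <= N ^ K)%N.
  by apply: (leq_trans _ H1); rewrite -{1}(expn1 2) leq_exp2l.
nia.
Qed.

Lemma log2_ge1 (R : realType) (N : nat) : (2 <= N)%N -> 1 <= log2 (N%:R : R).
Proof.
move=> HN; rewrite /log2 ler_pdivlMr ?ln_gt0 ?ltr1n // mul1r ler_ln ?posrE ?ltr0n //.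
  by rewrite ler_nat.
by apply: (leq_trans _ HN).
Qed.

Lemma trunc_log2_le (R : realType) (m : nat) : (0 < m)%N ->
  (trunc_log 2 m)%:R <= log2 (m%:R : R).
Proof.
move=> Hm; set t := trunc_log 2 m.
have Ht : (2 ^ t <= m)%N := trunc_logP (isT : (1 < 2)%N) Hm.
rewrite /log2 ler_pdivlMr ?ln_gt0 ?ltr1n // mulr_natl.
rewrite -lnXn ?ltr0n // ler_ln ?posrE ?exprn_gt0 ?ltr0n //.
by rewrite -natrX ler_nat.
Qed.

Lemma main_count (R : realType) (N : nat) (hN : (2 <= N)%N)
    (f : input N -> bool) (b : bool) (h : R) :
  (0 < #|[set y | f y == b]|)%N ->
  10 * (1 + log2 ((#|[set y | f y == b]|)%:R : R)) * log2 (N%:R : R) < h ->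
  (#|[set x | h <= (cert_cplx f x)%:R]|)%:R < 2 `^ h.
Proof.
set m := #|[set y | f y == b]| => Hm1 Hh.
set t := trunc_log 2 m; set K := t.+1.
have Hmt : (m < 2 ^ K)%N := trunc_log_ltn m (isT : (1 < 2)%N).
have HtR : (t%:R : R) <= log2 (m%:R : R) := @trunc_log2_le R m Hm1.
have HL := @log2_ge1 R N hN.
set L := log2 (N%:R : R) in Hh HL.
have HKR : (K%:R : R) <= 1 + log2 (m%:R : R) by rewrite /K -addn1 natrD addrC lerD2l.
have HE : 10 * K%:R * L < h.
  apply: le_lt_trans Hh; rewrite ler_wpM2r ?ler_wpM2l //; lra.
have HKh : (K%:R : R) < h.
  apply: le_lt_trans HE; have : (0 : R) <= K%:R by rewrite ler0n. nra.
have Hsub : [set x | h <= ((cert_cplx f x)%:R : R)] \subset [set x | (K < cert_cplx f x)%N].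
  apply/fintype.subsetP => x; rewrite !finset.inE => Hx.
  by rewrite -(ltr_nat R); apply: lt_le_trans Hx.
have Hc := @count_bound N f b K Hmt.
have Hn := @nat_bound N m K hN (isT : (0 < K)%N) Hmt.
apply: (@lt_le_trans _ _ ((N ^ (10 * K))%N%:R)).
  rewrite ltr_nat; apply: leq_ltn_trans (subset_leq_card Hsub) _.
  exact: leq_ltn_trans Hc Hn.
rewrite natrX -powR_mulrn ?ler0n // -{1}(@pow2_log2 R N%:R); last first.
  by rewrite ltr0n; apply: leq_trans hN.
rewrite -powRrM; apply: ler_powR; first by rewrite ler1n.
rewrite -/L natrM mulrC; apply: ltW; apply: le_lt_trans HE; lra.
Qed.

Theorem theorem22 (R : realType) (N : nat) (hN : (2 <= N)%N)
    (f : input N -> bool) :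
  Hindex (fun x => ((cert_cplx f x)%:R : R))
    <= 10 * Bal (R := R) f * log2 (N%:R : R).
Proof.
apply: Hindex_le => [x|h Hh]; first by rewrite ler0n.
move: Hh; rewrite /Bal; case: ifP => Hc Hh.
  have -> : [set x | h <= ((cert_cplx f x)%:R : R)] = (finset.set0 : {set input N}).
    apply/setP => x; rewrite !finset.inE; apply/negbTE; rewrite -ltNge.
    have : (cert_cplx f x <= #|(finset.set0 : {set 'I_N})|)%N.
      apply: cert_le; apply/forallP => y; apply/implyP => _.
      by move/forallP: Hc => /(_ y) /forallP /(_ x).
    rewrite cards0 leqn0 => /eqP ->.
    by move: Hh; rewrite mulr0 mul0r.
  by rewrite cards0 powR_gt0.
have [x0 [y0 Hxy]] : exists x y, f x != f y.
  move/negbT: Hc; rewrite negb_forall => /existsP [x].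
  by rewrite negb_forall => /existsP [y Hxy]; exists x, y.
have Hpos : forall b, (0 < #|[set y | f y == b]|)%N.
  move=> b; apply/card_gt0P.
  case E: (f x0 == b); first by exists x0; rewrite finset.inE.
  exists y0; rewrite finset.inE.
  by move: Hxy E; case: (f x0); case: (f y0); case: (b).
have E0 : #|[set x | ~~ f x]%classic| = #|[set y | f y == false]|.
  rewrite (@card_cset _ (fun x => ~~ f x)); apply: eq_card => x.
  by rewrite !finset.inE; case: (f x).
have E1 : #|[set x | f x]%classic| = #|[set y | f y == true]|.
  rewrite (@card_cset _ f); apply: eq_card => x.
  by rewrite !finset.inE; case: (f x).
move: Hh; rewrite E0 E1 minEle; case: ifP => _ Hh.
  exact: (@main_count R N hN f false h (Hpos false) Hh).
exact: (@main_count R N hN f true h (Hpos true) Hh).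
Qed.
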